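(* Let $D$ be an integral domain with quotient field $K$ and $n\ge1$. Let $\mathcal C_n$ be the set of companion matrices of monic polynomials of degree $n$ in $D[x]$, and $\mathcal I_n\subseteq\mathcal C_n$ the subset of companion matrices of monic degree-$n$ polynomials that are irreducible in $D[x]$. Then (1) $\mathrm{Int}_K(M_n(D))=\mathrm{Int}_K(\mathcal C_n, M_n(D))$; (2) if moreover the intersection of all maximal ideals of $D$ of finite index is $(0)$ (for instance, if $D$ is a Dedekind domain with infinitely many maximal ideals of finite index), then $\mathrm{Int}_K(M_n(D))=\mathrm{Int}_K(\mathcal I_n, M_n(D))$.
   Context: $M_n(D)$ is the ring of $n\times n$ matrices over $D$. For a subset $S\subseteq M_n(D)$, $\mathrm{Int}_K(S,M_n(D))=\{f\in K[x]\mid f(C)\in M_n(D)\text{ for all }C\in S\}$, where $f(C)$ is computed in $M_n(K)$; and $\mathrm{Int}_K(M_n(D))=\mathrm{Int}_K(M_n(D),M_n(D))$. *)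

(* Defs.v *)
From HB Require Import structures.
From mathcomp Require Import all_boot all_order all_algebra.
Set Implicit Arguments. Unset Strict Implicit. Unset Printing Implicit Defensive.
Import GRing.Theory.
Local Open Scope ring_scope.

Section Defs.
Variable D : idomainType.
Local Notation K := {fraction D}.

Definition mx_eval (n : nat) (f : {poly K}) (A : 'M[K]_n) : 'M[K]_n :=
  \sum_(i < size f) f`_i *: A ^+ i.

Definition in_MnD (n : nat) (A : 'M[K]_n) : Prop :=
  exists B : 'M[D]_n, A = map_mx (@tofrac D) B.

Definition IntK (n : nat) (S : 'M[D]_n -> Prop) (f : {poly K}) : Prop :=
  forall C : 'M[D]_n, S C -> in_MnD (mx_eval f (map_mx (@tofrac D) C)).

Definition IntK_full (n : nat) (f : {poly K}) : Prop :=
  IntK (fun _ : 'M[D]_n => True) f.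

Definition companion_n (n : nat) (p : {poly D}) (hp : size p = n.+1) : 'M[D]_n :=
  castmx (congr1 predn hp, congr1 predn hp) (companionmx p).

Definition Cn (n : nat) (C : 'M[D]_n) : Prop :=
  exists (p : {poly D}) (hp : size p = n.+1), p \is monic /\ C = companion_n hp.

Definition irreducible_in_polyring (p : {poly D}) : Prop :=
  p != 0 /\ p \isn't a GRing.unit /\
  forall g h : {poly D}, p = g * h -> g \is a GRing.unit \/ h \is a GRing.unit.

Definition In_ (n : nat) (C : 'M[D]_n) : Prop :=
  exists (p : {poly D}) (hp : size p = n.+1),
    [/\ p \is monic, irreducible_in_polyring p & C = companion_n hp].

Definition is_ideal (I : D -> Prop) : Prop :=
  [/\ I 0, (forall x y, I x -> I y -> I (x - y)) & (forall a x, I x -> I (a * x))].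

Definition is_maximal_ideal (I : D -> Prop) : Prop :=
  [/\ is_ideal I, ~ I 1 &
      forall J : D -> Prop, is_ideal J -> (forall x, I x -> J x) ->
        (exists x, J x /\ ~ I x) -> J 1].

Definition finite_index (I : D -> Prop) : Prop :=
  exists s : seq D, forall x : D, exists2 y, y \in s & I (x - y).

Definition fin_max_ideals_trivial_intersection : Prop :=
  forall x : D, (forall I, is_maximal_ideal I -> finite_index I -> I x) -> x = 0.

End Defs.

(* Main.v *)
Require Import Defs.
From HB Require Import structures.
From mathcomp Require Import all_boot all_order all_algebra.
From mathcomp Require Import all_fingroup all_field.
From mathcomp Require Import ring zify.
From Stdlib Require Import Classical ClassicalEpsilon.
Set Implicit Arguments. Unset Strict Implicit. Unset Printing Implicit Defensive.
Import GRing.Theory.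
Local Open Scope ring_scope.

Section IrrExists.
Variable F : finFieldType.

Lemma exists_irr n : (0 < n)%N -> exists q : {poly F}, [/\ q \is monic, size q = n.+1 &
   forall g h : {poly F}, q = g * h -> (size g <= 1)%N \/ (size h <= 1)%N].
Proof.
move=> n_gt0.
have F_gt1 : (1 < #|F|)%N := finNzRing_gt1 F.
pose N := (#|F| ^ n)%N.
have N_gt1 : (1 < N)%N by rewrite /N -(exp1n n) ltn_exp2r.
pose P : {poly F} := 'X^N - 'X.
have szP : size P = N.+1 by rewrite /P size_polyDl ?size_polyXn // size_polyN size_polyX ltnS.
have nzP : P != 0 by rewrite -size_poly_eq0 szP.
have [L [zs DP defL]] := FinSplittingFieldFor nzP.
have mapP : map_poly (GRing.in_alg L) P = 'X^N - 'X.
  by rewrite /P rmorphB /= map_polyXn map_polyX.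
rewrite mapP in DP.
have [a _ Da] := @finField_galois_generator F L 1%AS {:L} (sub1v _).
rewrite dimv1 expn1 in Da.
pose b := (a ^+ n)%g.
have Db x : b x = x ^+ N.
  rewrite /b /N; elim: (n) => [|i IHi]; first by rewrite gal_id.
  by rewrite expgSr galM ?memvf // IHi Da ?memvf // -exprM -expnSr.
pose E := fixedField [set b].
have memE x : (x \in E) = (x ^+ N == x).
  apply/fixedFieldP/eqP; rewrite ?memvf //.
    by move=> H; rewrite -Db H ?set11.
  by move=> H y /set1P ->; rewrite Db.
have Uzs : uniq zs.
  rewrite -separable_prod_XsubC -(eqp_separable DP).
  have [p pp pcharF] := finPcharP F.
  have cardF : #|F| = (p ^ logn p #|F|)%N := card_pprimeChar pcharF.
  have pcharL : p \in [pchar L] by rewrite pchar_lalg.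
  have N0 : N%:R = 0 :> L.
    have lp : (0 < logn p #|F| * n)%N.
      rewrite muln_gt0 n_gt0 andbT lt0n; apply/negP=> /eqP e.
      by move: F_gt1; rewrite cardF e.
    by rewrite /N cardF -expnM natrX (pcharf0 pcharL) expr0n gtn_eqF.
  rewrite unlock derivB derivXn derivX -mulr_natr (_ : N%:R = 0).
    rewrite mulr0 sub0r; apply/Bezout_coprimepP; exists (0, -1).
    by rewrite /= mul0r add0r mulrNN mulr1 eqpxx.
  by rewrite -polyC_natr N0.
have in_zs x : (x \in zs) = (x \in E).
  by rewrite -root_prod_XsubC -(eqp_root DP) memE /root !hornerE subr_eq0.
have szzs : size zs = N.
  have := eqp_size DP; rewrite size_prod_XsubC size_polyDl ?size_polyXn //.
    by case.
  by rewrite size_polyN size_polyX ltnS.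
have dimE : \dim E = n.
  pose fL := finvect_type L.
  have := card_vspace (E : {vspace fL}).
  have -> : #|(E : {vspace fL})| = N.
    rewrite -szzs -(card_uniqP (Uzs : uniq (zs : seq fL))).
    by apply: eq_card => x; rewrite /= -in_zs.
  by move/eqP; rewrite /N eqn_exp2l // => /eqP.
have /and3P[_ sepE _] := finField_galois (sub1v E).
pose z := separable_generator 1 E.
have defE := eq_adjoin_separable_generator sepE (sub1v E).
have szm : size (minPoly 1 z) = n.+1.
  by rewrite size_minPoly adjoin_degreeE -defE dimv1 divn1 dimE.
have /polyOver1P[q Dq] := minPolyOver 1 z.
have szq : size q = n.+1 by rewrite -szm Dq size_map_poly.
exists q; split => //.
  by rewrite -(map_monic (GRing.in_alg L)) -Dq monic_minPoly.
move=> g h qgh; case: (leqP (size g) 1) => [g1|g1]; first by left.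
case: (leqP (size h) 1) => [h1|h1]; first by right. exfalso.
have nzg : g != 0 by rewrite -size_poly_gt0 ltnW.
have nzh : h != 0 by rewrite -size_poly_gt0 ltnW.
have szgh : (size g + size h).-1 = n.+1 by rewrite -szq qgh size_mul.
have : root (minPoly 1 z) z := root_minPoly 1 z.
rewrite Dq qgh rmorphM rootM => /orP[] r.
  have gO : map_poly (GRing.in_alg L) g \is a polyOver 1%VS by apply/polyOver1P; exists g.
  have := minPoly_dvdp gO r.
  move/dvdp_leq; rewrite map_poly_eq0 nzg szm size_map_poly => /(_ isT) le.
  move: szgh h1 le; move: (size g) (size h) => x y; lia.
have hO : map_poly (GRing.in_alg L) h \is a polyOver 1%VS by apply/polyOver1P; exists h.
have := minPoly_dvdp hO r.
move/dvdp_leq; rewrite map_poly_eq0 nzh szm size_map_poly => /(_ isT) le.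
by move: szgh g1 le; move: (size g) (size h) => x y; lia.
Qed.
End IrrExists.

Local Open Scope quotient_scope.

Definition pb (P : Prop) : bool := if excluded_middle_informative P then true else false.
Lemma pbP (P : Prop) : reflect P (pb P).
Proof. by rewrite /pb; case: excluded_middle_informative => h; constructor. Qed.

Record MFI (D : idomainType) := {
  mI : D -> Prop;
  mHI : is_maximal_ideal mI;
  ms : seq D;
  mHs : forall x : D, exists2 y, y \in ms & mI (x - y) }.

Section Quot.
Variable D : idomainType.
Variable R : MFI D.
Local Notation I := (mI R).
Local Notation HI := (mHI R).
Local Notation s := (ms R).
Local Notation Hs := (mHs R).

Definition Ib : {pred D} := fun x => pb (I x).

Lemma IbE x : (x \in Ib) = pb (I x). Proof. by []. Qed.

Lemma Ib_closed : idealr_closed Ib.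
Proof.
case: HI => [[I0 IB IM] I1 _]; split.
- by rewrite IbE; apply/pbP.
- by rewrite IbE; apply/pbP.
- move=> a u v; rewrite !IbE => /pbP Iu /pbP Iv; apply/pbP.
  have Inv : I (- v) by rewrite -sub0r; apply: IB.
  by have := IB _ _ (IM a u Iu) Inv; rewrite opprK.
Qed.

HB.instance Definition _ := isIdealr.Build D Ib Ib_closed.

Notation Q := {ideal_quot Ib}.

Lemma piQ0 x : (\pi_Q x == 0) = pb (I x).
Proof.
have -> : (0 : Q) = \pi_Q 0 by rewrite raddf0.
by rewrite -Quotient.idealrBE subr0.
Qed.


Lemma piQ_eq0 x : \pi_Q x = 0 <-> I x.
Proof. by split => [/eqP|h]; [rewrite piQ0 => /pbP | apply/eqP; rewrite piQ0; apply/pbP]. Qed.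

Lemma piQ_eq x y : \pi_Q x = \pi_Q y <-> I (x - y).
Proof.
rewrite -piQ_eq0 rmorphB /=; split => [->|]; first by rewrite subrr.
by move/eqP; rewrite subr_eq0 => /eqP.
Qed.

Lemma inv_exists (q : Q) : q != 0 -> exists y : D, I (y * generic_quotient.repr q - 1).
Proof.
case: HI => [[I0 IB IM] I1 Imax] qn0.
have nI : ~ I (generic_quotient.repr q) by move/piQ_eq0; rewrite generic_quotient.reprK; apply/eqP.
pose J z := exists y i, I i /\ z = y * generic_quotient.repr q + i.
have J1 : J 1.
  apply: (Imax J).
  - split.
    + by exists 0, 0; rewrite mul0r addr0.
    + move=> _ _ [y1 [i1 [Ii1 ->]]] [y2 [i2 [Ii2 ->]]].
      exists (y1 - y2), (i1 - i2); split; first exact: IB.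
      by rewrite mulrBl; ring.
    + move=> a _ [y [i [Ii ->]]]; exists (a * y), (a * i); split; first exact: IM.
      by ring.
  - by move=> x Ix; exists 0, x; rewrite mul0r add0r.
  - by exists (generic_quotient.repr q); split => //; exists 1, 0; rewrite mul1r addr0.
case: J1 => y [i [Ii e]]; exists y.
have -> : y * generic_quotient.repr q - 1 = 0 - i by rewrite e; ring.
by apply: IB.
Qed.

Definition invQ (q : Q) : Q :=
  if q == 0 then 0 else \pi_Q (epsilon (inhabits 0) (fun y : D => I (y * generic_quotient.repr q - 1))).

Lemma mulVQ (q : Q) : q != 0 -> invQ q * q = 1.
Proof.
move=> qn0; rewrite /invQ (negPf qn0).
have := epsilon_spec (inhabits 0) _ (inv_exists qn0).
set y := epsilon _ _ => Iy.
by rewrite -[q in _ * q]generic_quotient.reprK -rmorphM -(rmorph1 \pi_Q); apply/piQ_eq.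
Qed.

Lemma invQ0 : invQ 0 = 0.
Proof. by rewrite /invQ eqxx. Qed.

HB.instance Definition _ := GRing.ComNzRing_isField.Build Q mulVQ invQ0.


Definition fQ (q : Q) : 'I_(size s).+1 :=
  epsilon (inhabits ord0) (fun i : 'I_(size s).+1 => I (generic_quotient.repr q - nth 0 s i)).
Definition gQ (i : 'I_(size s).+1) : option Q := Some (\pi_Q (nth 0 s i)).
Lemma fQK : pcancel fQ gQ.
Proof.
move=> q; rewrite /gQ; congr Some.
have ex : exists i : 'I_(size s).+1, I (generic_quotient.repr q - nth 0 s i).
  have [y ys Iy] := Hs (generic_quotient.repr q).
  have ilt : (index y s < (size s).+1)%N by rewrite ltnS ltnW // index_mem.
  by exists (Ordinal ilt); rewrite /= nth_index.
have := epsilon_spec (inhabits ord0) _ ex; rewrite -/(fQ q) => Ii.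
by rewrite -[RHS]generic_quotient.reprK; apply/esym/piQ_eq.
Qed.

HB.instance Definition _ := Choice_isCountable.Build Q (pcan_pickleK fQK).
HB.instance Definition _ : isFinite Q := PCanIsFinite fQK.

Definition QF : finFieldType := Q.

End Quot.

Lemma quot_finfield (D : idomainType) (I : D -> Prop) :
  is_maximal_ideal I -> finite_index I ->
  exists (F : finFieldType) (pi : {rmorphism D -> F}),
    (forall x, pi x = 0 <-> I x) /\ (forall y, exists x, pi x = y).
Proof.
move=> HI [s Hs]; pose R := Build_MFI HI Hs.
exists (QF R), (\pi_(QF R) : {rmorphism D -> QF R}); split.
  by move=> x; apply: (piQ_eq0 R).
by move=> y; exists (generic_quotient.repr (y : {ideal_quot (Ib R)})); apply: generic_quotient.reprK.
Qed.

Local Close Scope quotient_scope.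

Local Open Scope quotient_scope.


Lemma frac_repr (D : idomainType) (x : {fraction D}) :
  exists a b : D, b != 0 /\ x = tofrac a / tofrac b.
Proof.
elim/quotW: x => r; exists r.1, r.2; split; first exact: denom_ratioP.
unlock tofrac. rewrite !piE. apply/eqmodP; rewrite /= FracField.equivfE /=.
rewrite /FracField.mulf /FracField.invf !numden_Ratio ?oner_neq0 ?denom_ratioP ?mulf_neq0 // ; first by rewrite !mul1r mulr1 mulrC.
all: by rewrite ?oner_neq0 ?denom_ratioP.
Qed.



Lemma poly_denom (D : idomainType) (f : {poly {fraction D}}) :
  exists (d : D) (g : {poly D}), d != 0 /\ f = (tofrac d)^-1 *: map_poly (@tofrac D) g.
Proof.
elim/poly_ind: f => [|p c [d1 [g1 [d1n0 ->]]]].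
  by exists 1, 0; rewrite oner_neq0 rmorph0 scaler0.
have [a [b [bn0 ->]]] := frac_repr c.
exists (d1 * b), ((b *: g1) * 'X + (d1 * a)%:P); split; first by rewrite mulf_neq0.
have d1F : tofrac d1 != 0 by rewrite tofrac_eq0.
have bF : tofrac b != 0 by rewrite tofrac_eq0.
apply/polyP => i; rewrite !(coefZ, coefD, coefMX, coefC, coef_map) /=.
case: i => [|i] /=; rewrite ?add0r ?addr0 rmorphM /=.
  by rewrite rmorphM invfM mulrACA mulVf // mul1r mulrC.
by rewrite rmorphM invfM -mulrA (mulrA _ (tofrac b)) mulVf // mul1r.
Qed.

Local Close Scope quotient_scope.


Section Dv.
Variable R : comNzRingType.
Definition dv (d x : R) := exists y, x = d * y.
Definition mxdv d m k (M : 'M[R]_(m, k)) := forall i j, dv d (M i j).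

Lemma dv0 d : dv d 0. Proof. by exists 0; rewrite mulr0. Qed.
Lemma dvD d x y : dv d x -> dv d y -> dv d (x + y).
Proof. by move=> [a ->] [b ->]; exists (a + b); rewrite mulrDr. Qed.
Lemma dvN d x : dv d x -> dv d (- x).
Proof. by move=> [a ->]; exists (- a); rewrite mulrN. Qed.
Lemma dvMl d x y : dv d y -> dv d (x * y).
Proof. by move=> [a ->]; exists (x * a); rewrite mulrCA. Qed.
Lemma dvMr d x y : dv d x -> dv d (x * y).
Proof. by move=> h; rewrite mulrC; apply: dvMl. Qed.
Lemma dv_sum d I (r : seq I) (P : pred I) (F : I -> R) :
  (forall i, P i -> dv d (F i)) -> dv d (\sum_(i <- r | P i) F i).
Proof. by move=> h; apply: big_ind => //; [apply: dv0 | apply: dvD]. Qed.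

Lemma mxdv0 d m k : mxdv d (0 : 'M[R]_(m, k)).
Proof. by move=> i j; rewrite mxE; apply: dv0. Qed.
Lemma mxdvD d m k (A B : 'M[R]_(m, k)) : mxdv d A -> mxdv d B -> mxdv d (A + B).
Proof. by move=> hA hB i j; rewrite mxE; apply: dvD. Qed.
Lemma mxdvN d m k (A : 'M[R]_(m, k)) : mxdv d A -> mxdv d (- A).
Proof. by move=> hA i j; rewrite mxE; apply: dvN. Qed.
Lemma mxdvB d m k (A B : 'M[R]_(m, k)) : mxdv d A -> mxdv d B -> mxdv d (A - B).
Proof. by move=> hA hB; apply: mxdvD => //; apply: mxdvN. Qed.
Lemma mxdvZ d m k c (A : 'M[R]_(m, k)) : mxdv d A -> mxdv d (c *: A).
Proof. by move=> hA i j; rewrite mxE; apply: dvMl. Qed.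
Lemma mxdvZl d m k c (A : 'M[R]_(m, k)) : dv d c -> mxdv d (c *: A).
Proof. by move=> hc i j; rewrite mxE; apply: dvMr. Qed.
Lemma mxdvMl d m k l (A : 'M[R]_(m, k)) (B : 'M[R]_(k, l)) : mxdv d B -> mxdv d (A *m B).
Proof. by move=> hB i j; rewrite mxE; apply: dv_sum => x _; apply: dvMl. Qed.
Lemma mxdvMr d m k l (A : 'M[R]_(m, k)) (B : 'M[R]_(k, l)) : mxdv d A -> mxdv d (A *m B).
Proof. by move=> hA i j; rewrite mxE; apply: dv_sum => x _; apply: dvMr. Qed.
Lemma mxdv_sum d m k I (r : seq I) (P : pred I) (F : I -> 'M[R]_(m, k)) :
  (forall i, P i -> mxdv d (F i)) -> mxdv d (\sum_(i <- r | P i) F i).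
Proof. by move=> h; apply: big_ind => //; [apply: mxdv0 | apply: mxdvD]. Qed.

Lemma horner_mx_sum n' (A : 'M[R]_n'.+1) (p : {poly R}) :
  horner_mx A p = \sum_(i < size p) p`_i *: A ^+ i.
Proof.
rewrite -{1}[p]coefK poly_def rmorph_sum /=; apply: eq_bigr => i _.
by rewrite linearZ /= rmorphXn /= horner_mx_X.
Qed.

Lemma mxdv_pow d n' (A B : 'M[R]_n'.+1) k : mxdv d (A - B) -> mxdv d (A ^+ k - B ^+ k).
Proof.
move=> hAB; elim: k => [|k IH]; first by rewrite !expr0 subrr; apply: mxdv0.
have -> : A ^+ k.+1 - B ^+ k.+1 = A ^+ k *m (A - B) + (A ^+ k - B ^+ k) *m B.
  by rewrite !mulmxE mulrBr mulrBl !exprSr addrA subrK.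
by apply: mxdvD; [apply: mxdvMl | apply: mxdvMr].
Qed.

Lemma mxdv_horner d n' (A B : 'M[R]_n'.+1) p : mxdv d (A - B) ->
  mxdv d (horner_mx A p - horner_mx B p).
Proof.
move=> hAB; rewrite !horner_mx_sum -sumrB; apply: mxdv_sum => i _.
by rewrite -scalerBr; apply: mxdvZ; apply: mxdv_pow.
Qed.

End Dv.

Lemma sum_delta (R : nzRingType) m (x : nat -> R) j :
  \sum_(i < m) x i * ((i : nat) == j)%:R = if (j < m)%N then x j else 0.
Proof.
elim: m => [|m IH]; first by rewrite big_ord0.
rewrite big_ord_recr /= IH ltnS.
by case: (ltngtP j m) => h; rewrite /= ?mulr0 ?addr0 ?add0r ?mulr1 ?h.
Qed.

Section Comp.
Variable D : idomainType.

Lemma compE n (p : {poly D}) (hp : size p = n.+1) i j :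
  companion_n hp i j = if (i == n.-1 :> nat) then - p`_j else (i.+1 == j :> nat)%:R.
Proof.
rewrite /companion_n castmxE !mxE /=.
by have -> : (size p).-1.-1 = n.-1 by rewrite hp.
Qed.

Lemma char_poly_castmx (R : comNzRingType) m k (e : m = k) (M : 'M[R]_m) :
  char_poly (castmx (e, e) M) = char_poly M.
Proof. by case: k / e; rewrite castmx_id. Qed.

Lemma char_poly_comp n (p : {poly D}) (hp : size p = n.+1) :
  p \is monic -> char_poly (companion_n hp) = p.
Proof. by move=> pm; rewrite /companion_n char_poly_castmx companionmxK. Qed.

Lemma comp_pow_row0 n' (p : {poly D}) (hp : size p = n'.+2) k (j : 'I_n'.+1) :
  (k < n'.+1)%N -> ((companion_n hp) ^+ k) ord0 j = (k == j :> nat)%:R.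
Proof.
elim: k j => [|k IH] j kn.
  by rewrite expr0 mxE.
rewrite exprSr -mulmxE mxE.
rewrite (eq_bigr (fun l : 'I_n'.+1 => companion_n hp (inord l) j * ((l : nat) == k)%:R)); last first.
  by move=> l _; rewrite IH ?(ltnW kn) // eq_sym mulrC inord_val.
rewrite (sum_delta _ (fun l => companion_n hp (inord l) j)).
rewrite (ltnW kn) compE /= inordK ?(ltnW kn) // ltn_eqF //.
Qed.

Lemma horner_comp_row0 n' (p : {poly D}) (hp : size p = n'.+2) (r : {poly D}) (j : 'I_n'.+1) :
  (size r <= n'.+1)%N -> (horner_mx (companion_n hp) r) ord0 j = r`_j.
Proof.
move=> szr; rewrite horner_mx_sum summxE.
rewrite (eq_bigr (fun i : 'I_(size r) => r`_i * ((i : nat) == j)%:R)); last first.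
  by move=> i _; rewrite mxE comp_pow_row0 // (leq_trans (ltn_ord i)).
rewrite sum_delta; case: ifP => // /negbT; rewrite -leqNgt => h.
by rewrite nth_default.
Qed.

End Comp.

Section Core.
Variable D : idomainType.
Variable n' : nat.

Lemma part1_core (d : D) (g : {poly D}) :
  (forall (p : {poly D}) (hp : size p = n'.+2), p \is monic ->
     mxdv d (horner_mx (companion_n hp) g)) ->
  forall A : 'M[D]_n'.+1, mxdv d (horner_mx A g).
Proof.
move=> H A.
have chim : char_poly A \is monic := char_poly_monic A.
have hchi : size (char_poly A) = n'.+2 := size_char_poly A.
set r := g %% char_poly A.
have key (M : 'M[D]_n'.+1) : char_poly M = char_poly A -> horner_mx M g = horner_mx M r.
  move=> e; have CH : horner_mx M (char_poly A) = 0 by rewrite -e Cayley_Hamilton.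
  rewrite {1}(Pdiv.IdomainMonic.divp_eq chim g) rmorphD rmorphM.
  by rewrite [X in _ * X + _]CH mulr0 add0r.
have szr : (size r <= n'.+1)%N.
  by rewrite -ltnS -hchi ltn_modpN0 // monic_neq0.
have dvr : forall j, dv d r`_j.
  move=> j; case: (ltnP j n'.+1) => jn; last by rewrite nth_default ?(leq_trans szr) //; apply: dv0.
  have := H _ hchi chim ord0 (Ordinal jn).
  by rewrite (key _ (char_poly_comp hchi chim)) horner_comp_row0.
rewrite key // horner_mx_sum; apply: mxdv_sum => i _; apply: mxdvZl; exact: dvr.
Qed.

Lemma comp_diff (p q : {poly D}) (hp : size p = n'.+2) (hq : size q = n'.+2) (d : D) :
  (forall i, dv d (q`_i - p`_i)) -> mxdv d (companion_n hq - companion_n hp).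
Proof.
move=> h i j; rewrite !mxE !compE; case: ifP => _; last by rewrite subrr; apply: dv0.
by rewrite opprK addrC -opprB; apply: dvN; exact: h.
Qed.

Lemma part2_core (d : D) (g : {poly D}) :
  (forall (p : {poly D}) (hp : size p = n'.+2), p \is monic -> irreducible_in_polyring p ->
     mxdv d (horner_mx (companion_n hp) g)) ->
  (forall p : {poly D}, p \is monic -> size p = n'.+2 -> exists q : {poly D},
     [/\ q \is monic, irreducible_in_polyring q, size q = n'.+2 & forall i, dv d (q`_i - p`_i)]) ->
  forall (p : {poly D}) (hp : size p = n'.+2), p \is monic ->
     mxdv d (horner_mx (companion_n hp) g).
Proof.
move=> H Hex p hp pm.
have [q [qm qirr hq dq]] := Hex p pm hp.
have h1 := H q hq qm qirr.
have h2 := mxdv_horner g (comp_diff hp hq dq).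
have -> : horner_mx (companion_n hp) g =
   horner_mx (companion_n hq) g - (horner_mx (companion_n hq) g - horner_mx (companion_n hp) g).
  by rewrite opprB addrC subrK.
exact: mxdvB.
Qed.

End Core.


Lemma near_irr (D : idomainType) n (d : D) :
  fin_max_ideals_trivial_intersection D -> (0 < n)%N -> d != 0 ->
  forall p : {poly D}, p \is monic -> size p = n.+1 -> exists q : {poly D},
     [/\ q \is monic, irreducible_in_polyring q, size q = n.+1 & forall i, dv d (q`_i - p`_i)].
Proof.
move=> Hfin n_gt0 dn0 p pm szp.
have [I [maxI finI nId]] : exists I, [/\ is_maximal_ideal I, finite_index I & ~ I d].
  apply: NNPP => hno; move/eqP: dn0; apply; apply: Hfin => I mI fI.
  by apply: NNPP => nI; apply: hno; exists I.
have [F [pi [kerpi surj]]] := quot_finfield maxI finI.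
have [q0 [q0m szq0 irrq0]] := exists_irr F n_gt0.
have [u [m0 [Im0 e1]]] : exists u m0, I m0 /\ 1 = u * d + m0.
  case: maxI => [[I0 IB IM] I1 Imax].
  pose J z := exists y i, I i /\ z = y * d + i.
  have : J 1.
    apply: (Imax J).
    - split.
      + by exists 0, 0; rewrite mul0r addr0.
      + move=> _ _ [y1 [i1 [Ii1 ->]]] [y2 [i2 [Ii2 ->]]].
        exists (y1 - y2), (i1 - i2); split; first exact: IB.
        by ring.
      + move=> a _ [y [i [Ii ->]]]; exists (a * y), (a * i); split; first exact: IM.
        by ring.
    - by move=> x Ix; exists 0, x; rewrite mul0r add0r.
    - by exists d; split => //; exists 1, 0; rewrite mul1r addr0.
  by case=> y [i [Ii e]]; exists y, i.
have ex_lift (y : F) : exists x, pi x == y by have [x hx] := surj y; exists x; apply/eqP.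
pose lift j := xchoose (ex_lift q0`_j).
have liftE j : pi (lift j) = q0`_j by apply/eqP; exact: xchooseP (ex_lift q0`_j).
have pim0 : pi m0 = 0 by apply/kerpi.
have piud : pi (u * d) = 1 by rewrite -(rmorph1 pi) e1 rmorphD pim0 addr0.
pose q := \poly_(j < n.+1) (if j == n then 1 else p`_j * m0 + lift j * (u * d)).
have qE j : q`_j = if (j < n)%N then p`_j * m0 + lift j * (u * d) else (j == n)%:R.
  by rewrite coef_poly ltnS; case: (ltngtP j n).
have szq : size q = n.+1.
  apply: size_poly_eq; rewrite eqxx; exact: oner_neq0.
have qm : q \is monic by rewrite monicE lead_coefE szq qE ltnn eqxx.
have pn : p`_n = 1 by move: pm; rewrite monicE lead_coefE szp => /eqP.
have mapq : map_poly pi q = q0.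
  apply/polyP => j; rewrite coef_map qE.
  case: (ltngtP j n) => h.
  - have e : pi (p`_j * m0 + lift j * (u * d)) = q0`_j.
      by rewrite rmorphD !rmorphM pim0 mulr0 add0r liftE -rmorphM piud mulr1.
    exact: e.
  - have e : pi 0 = q0`_j by rewrite rmorph0 nth_default ?szq0.
    exact: e.
  - have e : pi 1 = q0`_j.
      by rewrite rmorph1 h; move: q0m; rewrite monicE lead_coefE szq0 => /eqP.
    exact: e.
exists q; split => //.
- split; first by rewrite -size_poly_gt0 szq.
  split; first by rewrite poly_unitE szq eqSS; case: (n) n_gt0.
  move=> g h qgh.
  have lgh : lead_coef g * lead_coef h = 1 by rewrite -lead_coefM -qgh; exact/eqP.
  have ug : lead_coef g \is a GRing.unit by apply/unitrPr; exists (lead_coef h).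
  have uh : lead_coef h \is a GRing.unit by apply/unitrPr; exists (lead_coef g); rewrite mulrC.
  have nz_pi x : x \is a GRing.unit -> pi x != 0.
    by move=> ux; apply/negP => /eqP h0; move: (rmorph_unit pi ux); rewrite h0 unitr0.
  have szg : size (map_poly pi g) = size g by apply: size_map_poly_id0; apply: nz_pi.
  have szh : size (map_poly pi h) = size h by apply: size_map_poly_id0; apply: nz_pi.
  have gn0 : g != 0 by apply: contraTneq ug => ->; rewrite lead_coef0 unitr0.
  have hn0 : h != 0 by apply: contraTneq uh => ->; rewrite lead_coef0 unitr0.
  have unit_of (k : {poly D}) : k != 0 -> lead_coef k \is a GRing.unit -> (size k <= 1)%N ->
      k \is a GRing.unit.
    move=> kn0 uk sk; have sk1 : size k = 1%N.
      by apply/eqP; rewrite eqn_leq sk size_poly_gt0.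
    by rewrite poly_unitE sk1 eqxx /=; move: uk; rewrite lead_coefE sk1.
  case: (irrq0 (map_poly pi g) (map_poly pi h)); first by rewrite -rmorphM -qgh.
  + by rewrite szg => sg; left; apply: unit_of.
  + by rewrite szh => sh; right; apply: unit_of.
- move=> i; rewrite qE; case: ltnP => h.
  + exists (u * (lift i - p`_i)).
    have -> : m0 = 1 - u * d by rewrite e1; ring.
    by ring.
  + case: (ltngtP n i) h => h' h //.
    * by rewrite !nth_default ?szp // subrr; apply: dv0.
    * by rewrite -h' pn subrr; apply: dv0.
Qed.


Section Trans.
Variable D : idomainType.
Variable n' : nat.
Local Notation K := {fraction D}.

Lemma mx_evalE (f : {poly K}) (M : 'M[K]_n'.+1) : mx_eval f M = horner_mx M f.
Proof. by rewrite horner_mx_sum. Qed.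

Lemma in_MnD_iff (d : D) (B : 'M[D]_n'.+1) : d != 0 ->
  in_MnD ((tofrac d)^-1 *: map_mx (@tofrac D) B) <-> mxdv d B.
Proof.
move=> dn0; have dF : tofrac d != 0 by rewrite tofrac_eq0.
split.
  case=> B' /matrixP e i j; move: (e i j); rewrite !mxE => e'.
  by exists (B' i j); apply/eqP; rewrite -tofrac_eq rmorphM /= -e' mulrA divff // mul1r.
move=> h.
have ex i j : exists y, B i j == d * y by have [y hy] := h i j; exists y; apply/eqP.
exists (\matrix_(i, j) xchoose (ex i j)); apply/matrixP => i j; rewrite !mxE.
move: (xchooseP (ex i j)); set y := xchoose _ => /eqP ->.
by rewrite rmorphM /= mulrA mulVf // mul1r.
Qed.

Lemma IntK_mxdv (S : 'M[D]_n'.+1 -> Prop) (f : {poly K}) (d : D) (g : {poly D}) :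
  d != 0 -> f = (tofrac d)^-1 *: map_poly (@tofrac D) g ->
  (IntK S f <-> forall C, S C -> mxdv d (horner_mx C g)).
Proof.
move=> dn0 ->.
have E (C : 'M[D]_n'.+1) : mx_eval ((tofrac d)^-1 *: map_poly (@tofrac D) g) (map_mx (@tofrac D) C) =
    (tofrac d)^-1 *: map_mx (@tofrac D) (horner_mx C g).
  by rewrite mx_evalE linearZ /= map_horner_mx.
split => h C SC; [apply/(in_MnD_iff _ dn0) | rewrite E; apply/(in_MnD_iff _ dn0)];
  first rewrite -E; exact: h.
Qed.

End Trans.

Theorem mainTheorem2 (D : idomainType) (n : nat) (hn : (0 < n)%N) :
  (forall f : {poly {fraction D}}, IntK_full n f <-> IntK (@Cn D n) f) /\
  (fin_max_ideals_trivial_intersection D ->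
   forall f : {poly {fraction D}}, IntK_full n f <-> IntK (@In_ D n) f).
Proof.
case: n hn => // n' _; split.
  move=> f; have [d [g [dn0 ef]]] := poly_denom f.
  rewrite /IntK_full !(IntK_mxdv _ dn0 ef); split => h C hC; first exact: h.
  apply: part1_core => p hp pm; apply: h; by exists p, hp.
move=> Hfin f; have [d [g [dn0 ef]]] := poly_denom f.
rewrite /IntK_full !(IntK_mxdv _ dn0 ef); split => h C hC; first exact: h.
apply: part1_core; apply: part2_core.
  by move=> p hp pm pirr; apply: h; exists p, hp.
by move=> p pm szp; apply: near_irr.
Qed.
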